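(* Let $\mathcal F$ be a sheaf on a digraph $G$. For all subspaces $U_1,U_2\subset\mathcal F(V)$, $${\rm excess}(\mathcal F,U_1)+{\rm excess}(\mathcal F,U_2)\le{\rm excess}(\mathcal F,U_1\cap U_2)+{\rm excess}(\mathcal F,U_1+U_2).$$ Consequently the set of subspaces $U\subset\mathcal F(V)$ with ${\rm excess}(\mathcal F,U)={\rm m.e.}(\mathcal F)$ is closed under intersection and sum (so has a unique maximal and a unique minimal element), and for any two such maximizers $U_1,U_2$ one has $\Gamma_{\rm ht}(U_1+U_2)=\Gamma_{\rm ht}(U_1)+\Gamma_{\rm ht}(U_2)$.
   Context: A digraph has finite vertex and edge sets with tail/head maps. A sheaf $\mathcal F$ on $G$: finite-dimensional $\mathbb F$-vector spaces $\mathcal F(P)$, $P\in V_G\sqcup E_G$, with linear maps $\mathcal F(t,e)\colon\mathcal F(e)\to\mathcal F(t_Ge)$, $\mathcal F(h,e)\colon\mathcal F(e)\to\mathcal F(h_Ge)$; $\mathcal F(V)=\bigoplus_v\mathcal F(v)$, $\mathcal F(E)=\bigoplus_e\mathcal F(e)$; $d_h,d_t\colon\mathcal F(E)\to\mathcal F(V)$ send the summand $\mathcal F(e)$ into $\mathcal F(h_Ge)$ resp. $\mathcal F(t_Ge)$ via the restriction maps. For $U\subset\mathcal F(V)$, $\Gamma_{\rm ht}(U)=\bigoplus_e\{w\in\mathcal F(e):d_hw\in U,\ d_tw\in U\}\subset\mathcal F(E)$, ${\rm excess}(\mathcal F,U)=\dim\Gamma_{\rm ht}(U)-\dim U$, ${\rm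 m.e.}(\mathcal F)=\max_U{\rm excess}(\mathcal F,U)$. *)

(* Defs.v *)
From HB Require Import structures.
From mathcomp Require Import all_boot all_order all_algebra.
Set Implicit Arguments. Unset Strict Implicit. Unset Printing Implicit Defensive.
Import Order.TTheory GRing.Theory Num.Theory.
Local Open Scope ring_scope.

Record digraph := Digraph {
  vert : finType;
  edge : finType;
  tailG : edge -> vert;
  headG : edge -> vert }.

(* F(V) = (+)_v F(v) and F(E) = (+)_e F(e) are represented as finite-dimensional
   K-spaces FV, FE together with internal direct-sum decompositions into the
   stalks stalkV v, stalkE e.  The maps d_h, d_t : F(E) -> F(V) are linear maps
   sending the summand F(e) into F(h e), resp. F(t e); their restrictions to
   F(e) are the restriction maps F(h,e), F(t,e). *)
Record sheaf (K : fieldType) (G : digraph) := Sheaf {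
  FV : vectType K;
  FE : vectType K;
  stalkV : vert G -> {vspace FV};
  stalkE : edge G -> {vspace FE};
  stalkV_direct : directv (\sum_(v : vert G) stalkV v)%VS;
  stalkV_full : (\sum_(v : vert G) stalkV v)%VS = fullv;
  stalkE_direct : directv (\sum_(e : edge G) stalkE e)%VS;
  stalkE_full : (\sum_(e : edge G) stalkE e)%VS = fullv;
  d_h : 'Hom(FE, FV);
  d_t : 'Hom(FE, FV);
  d_h_stalk : forall e, (d_h @: stalkE e <= stalkV (headG e))%VS;
  d_t_stalk : forall e, (d_t @: stalkE e <= stalkV (tailG e))%VS }.

Definition Gamma_ht K G (S : sheaf K G) (U : {vspace FV S}) : {vspace FE S} :=
  (\sum_(e : edge G) (stalkE S e :&: (d_h S @^-1: U) :&: (d_t S @^-1: U)))%VS.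

Definition excess K G (S : sheaf K G) (U : {vspace FV S}) : int :=
  (\dim (Gamma_ht U))%:Z - (\dim U)%:Z.

Definition max_excess K G (S : sheaf K G) (U : {vspace FV S}) : Prop :=
  forall U' : {vspace FV S}, excess U' <= excess U.

(* Main.v *)
Require Import Defs.
From HB Require Import structures.
From mathcomp Require Import all_boot all_order all_algebra.
From mathcomp Require Import zify.
From Stdlib Require Import Classical.
Import Order.TTheory GRing.Theory Num.Theory.
Local Open Scope ring_scope.

Section Aux.
Variables (K : fieldType) (vT : vectType K).

Lemma sub_direct (I : finType) (U V : I -> {vspace vT}) :
  (forall i, (V i <= U i)%VS) -> directv (\sum_i U i)%VS -> directv (\sum_i V i)%VS.
Proof.
move=> sVU /directv_sum_independent dU; apply/directv_sum_independent.
move=> us Vu s0 i _; apply: dU => // j _.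
exact: (subvP (sVU j)) (Vu j isT).
Qed.

Lemma dim_direct (I : finType) (U : I -> {vspace vT}) :
  directv (\sum_i U i)%VS -> \dim (\sum_i U i)%VS = (\sum_i \dim (U i))%N.
Proof. by move/directvP. Qed.

End Aux.

Lemma exists_argmax (T : Type) (f : T -> nat) (N : nat) (x0 : T) :
  (forall x, (f x <= N)%N) -> exists x, forall y, (f y <= f x)%N.
Proof.
move=> hb.
have: forall k x, (N - f x <= k)%N -> exists x, forall y, (f y <= f x)%N.
  elim=> [|k IH] x hx.
    exists x => y; have := hb y; have := hb x; lia.
  case: (classic (forall y, (f y <= f x)%N)) => [h|/not_all_ex_not [y hy]].
    by exists x.
  apply: (IH y); have := hb y; have := hb x.
  move/negP: hy; rewrite -ltnNge; lia.
by move=> /(_ _ x0 (leqnn _)).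
Qed.

Section Sheaf.
Variables (K : fieldType) (G : digraph) (S : sheaf K G).
Implicit Types U V : {vspace FV S}.

Definition Ge (U : {vspace FV S}) (e : edge G) : {vspace FE S} :=
  (stalkE S e :&: (d_h S @^-1: U) :&: (d_t S @^-1: U))%VS.

Lemma memGe U e w : (w \in Ge U e) = [&& w \in stalkE S e, d_h S w \in U & d_t S w \in U].
Proof. by rewrite /Ge !memv_cap -!memv_preim andbA. Qed.

Lemma Ge_mono U V e : (U <= V)%VS -> (Ge U e <= Ge V e)%VS.
Proof. by move=> sUV; rewrite /Ge !capvS ?lpreimS. Qed.

Lemma Ge_stalk U e : (Ge U e <= stalkE S e)%VS.
Proof. by rewrite /Ge -capvA capvSl. Qed.

Lemma Ge_cap U V e : Ge (U :&: V) e = (Ge U e :&: Ge V e)%VS.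
Proof.
apply/vspaceP => w; rewrite memv_cap !memGe !memv_cap.
by case: (w \in stalkE S e); case: (d_h S w \in U); case: (d_h S w \in V);
   case: (d_t S w \in U); case: (d_t S w \in V).
Qed.

Lemma Gamma_mono U V : (U <= V)%VS -> (Gamma_ht U <= Gamma_ht V)%VS.
Proof.
move=> sUV; apply/subv_sumP => e _; apply: (sumv_sup e) => //; exact: Ge_mono.
Qed.

Lemma dimGamma U : \dim (Gamma_ht U) = (\sum_e \dim (Ge U e))%N.
Proof.
rewrite /Gamma_ht; apply: dim_direct.
apply: (@sub_direct _ _ _ (stalkE S)); [exact: Ge_stalk | exact: stalkE_direct].
Qed.

Lemma dimGammaD U V :
  \dim (Gamma_ht U + Gamma_ht V)%VS = (\sum_e \dim (Ge U e + Ge V e)%VS)%N.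
Proof.
rewrite /Gamma_ht -big_split /=.
apply: dim_direct; apply: (@sub_direct _ _ _ (stalkE S)); last exact: stalkE_direct.
by move=> e; rewrite subv_add !Ge_stalk.
Qed.

Lemma dimGammaI U V :
  \dim (Gamma_ht U :&: Gamma_ht V)%VS = \dim (Gamma_ht (U :&: V)).
Proof.
have h := dimv_sum_cap (Gamma_ht U) (Gamma_ht V).
rewrite dimGammaD !dimGamma -big_split /= in h.
have h2 : (\sum_e (\dim (Ge U e) + \dim (Ge V e)))%N =
          (\sum_e (\dim (Ge U e + Ge V e)%VS + \dim (Ge (U :&: V) e)))%N.
  by apply: eq_bigr => e _; rewrite Ge_cap dimv_sum_cap.
rewrite h2 big_split /= -dimGamma in h; lia.
Qed.

Lemma key (U1 U2 : {vspace FV S}) :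
  (\dim (Gamma_ht U1) + \dim (Gamma_ht U2) <= \dim (Gamma_ht (U1 :&: U2)) + \dim (Gamma_ht (U1 + U2)))%N.
Proof.
have h := dimv_sum_cap (Gamma_ht U1) (Gamma_ht U2).
have h2 := dimGammaI U1 U2.
have h3 : (Gamma_ht U1 + Gamma_ht U2 <= Gamma_ht (U1 + U2))%VS.
  by rewrite subv_add !Gamma_mono ?addvSl ?addvSr.
have := dimvS h3; lia.
Qed.

Lemma part1 (U1 U2 : {vspace FV S}) :
  excess U1 + excess U2 <= excess (U1 :&: U2)%VS + excess (U1 + U2)%VS.
Proof.
rewrite /excess. have := key U1 U2. have := dimv_sum_cap U1 U2. lia.
Qed.

End Sheaf.

Theorem theorem1 (K : fieldType) (G : digraph) (S : sheaf K G) :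
  [/\ (forall U1 U2 : {vspace FV S},
         excess U1 + excess U2 <= excess (U1 :&: U2)%VS + excess (U1 + U2)%VS),
      (forall U1 U2 : {vspace FV S}, max_excess U1 -> max_excess U2 ->
         max_excess (U1 :&: U2)%VS /\ max_excess (U1 + U2)%VS),
      (exists Umax : {vspace FV S}, max_excess Umax /\
         forall U, max_excess U -> (U <= Umax)%VS),
      (exists Umin : {vspace FV S}, max_excess Umin /\
         forall U, max_excess U -> (Umin <= U)%VS)
    & (forall U1 U2 : {vspace FV S}, max_excess U1 -> max_excess U2 ->
         Gamma_ht (U1 + U2)%VS = (Gamma_ht U1 + Gamma_ht U2)%VS)].
Proof.
have P1 := @part1 K G S.
have P2 : forall U1 U2 : {vspace FV S}, max_excess U1 -> max_excess U2 ->
         max_excess (U1 :&: U2)%VS /\ max_excess (U1 + U2)%VS.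
  move=> U1 U2 m1 m2; have := P1 U1 U2.
  have := m1 U2; have := m2 U1; have := m1 (U1 :&: U2)%VS; have := m1 (U1 + U2)%VS.
  move=> a b c d e; split=> U'; have := m1 U'; lia.
have [U0 mU0] : exists U0 : {vspace FV S}, max_excess U0.
  pose f (U : {vspace FV S}) := (\dim (Gamma_ht U) + \dim (fullv : {vspace FV S}) - \dim U)%N.
  have [|U hU] := @exists_argmax _ f (\dim (fullv : {vspace FE S}) + \dim (fullv : {vspace FV S})) 0%VS.
    move=> U; rewrite /f; have := dimvS (subvf (Gamma_ht U)); lia.
  exists U => U'; have := hU U'; rewrite /f /excess.
  have := dimvS (subvf U); have := dimvS (subvf U'); lia.
split=> //.
- pose T := {U : {vspace FV S} | max_excess U}.
  have [|[U mU] hU] := @exists_argmax T (fun U => \dim (sval U)) (\dim (fullv : {vspace FV S})) (exist _ U0 mU0).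
    by move=> [U ?]; exact: dimvS (subvf U).
  exists U; split=> // V mV.
  have [_ mUV] := P2 U V mU mV.
  have := hU (exist _ _ mUV) => /= hd.
  have : (U == U + V)%VS by rewrite eqEdim addvSl hd.
  by move/eqP => ->; rewrite addvSr.
- pose T := {U : {vspace FV S} | max_excess U}.
  have [|[U mU] hU] := @exists_argmax T (fun U => \dim (fullv : {vspace FV S}) - \dim (sval U))%N (\dim (fullv : {vspace FV S})) (exist _ U0 mU0).
    by move=> [U ?]; exact: leq_subr.
  exists U; split=> // V mV.
  have [mUV _] := P2 U V mU mV.
  have := hU (exist _ _ mUV) => /= hd.
  have : (U :&: V == U)%VS.
    rewrite eqEdim capvSl /=.
    have := dimvS (subvf U); have := dimvS (subvf (U :&: V)%VS); lia.
  by move/eqP => <-; rewrite capvSr.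
- move=> U1 U2 m1 m2.
  have := m1 U2; have := m2 U1; have := m1 (U1 :&: U2)%VS; have := m1 (U1 + U2)%VS.
  have := P1 U1 U2; rewrite /excess => a b c d e.
  have := dimv_sum_cap (Gamma_ht U1) (Gamma_ht U2).
  have := @dimGammaI K G S U1 U2 => f g.
  have h3 : (Gamma_ht U1 + Gamma_ht U2 <= Gamma_ht (U1 + U2))%VS.
    by rewrite subv_add !(@Gamma_mono K G S) ?addvSl ?addvSr.
  apply/eqP; rewrite eq_sym eqEdim h3 /=.
  have := dimv_sum_cap U1 U2.
  have := dimvS (capvSl (Gamma_ht U1) (Gamma_ht U2)).
  lia.
Qed.
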